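(* For each $N\in\mathbb{N}^*$ there exists a constant $K_N$ such that for all $(i_1,\dots,i_N)\in\{1,\dots,6\}^N$ and all $(x,y)\in\mathcal{D}$, $$|x_{i_1,\dots,i_N}(x,y)-z_{i_1,\dots,i_N}(x)|\leq K_N y\quad\text{and}\quad |y_{i_1,\dots,i_N}(x,y)|\leq K_N y.$$
   Context: Every non-degenerate triangle is mapped by a similitude to a triangle with vertices $(0,0)$, $(1,0)$, $(x,y)$, with the longest edge sent to $[(0,0),(1,0)]$ and the shortest edge to $[(0,0),(x,y)]$; $(x,y)$ is its characterizing point and $\mathcal{D}\subset[0,1/2]\times[0,\sqrt3/2]$ is the set of characterizing points (flat triangles have $y=0$). For the triangle with vertices $A=(0,0)$, $B=(x,y)$, $C=(1,0)$, let $D,E,F$ be the midpoints of $[A,B],[B,C],[A,C]$ and $G$ the barycenter; the barycentric subdivision gives $T_1=\{A,D,G\}$, $T_2=\{D,B,G\}$, $T_3=\{B,E,G\}$, $T_4=\{E,C,G\}$, $T_5=\{C,F,G\}$, $T_6=\{F,A,G\}$, and $(x_i(x,y),y_i(x,y))$ denotes the characterizing point of $T_i$. Set $z_i(x)=x_i(x,0)$ for $x\in[0,1/2]$. Let $(\iota_n)_{n\ge1}$ be i.i.d. uniform on $\{1,\dots,6\}$ and define the coupled chains $(X_{n+1},Y_{n+1})=(x_{\iota_{n+1}}(X_n,Y_n),y_{\iota_{n+1}}(X_n,Y_n))$ and $Z_{n+1}=z_{\iota_{n+1}}(Z_n)$. For $(x,y)\in\mathcal{D}$ and $(i_1,\dots,i_N)\in\{1,\dots,6\}^N$,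 $x_{i_1,\dots,i_N}(x,y)$, $y_{i_1,\dots,i_N}(x,y)$ and $z_{i_1,\dots,i_N}(x)$ denote the values of $X_N$, $Y_N$ and $Z_N$ when $(X_0,Y_0)=(x,y)$, $Z_0=x$ and $(\iota_1,\dots,\iota_N)=(i_1,\dots,i_N)$. *)

(* Defs.v *)
From Stdlib Require Import Reals Lra List.
Open Scope R_scope.

Definition pt := (R * R)%type.

Definition dist (P Q : pt) : R :=
  sqrt ((fst P - fst Q)^2 + (snd P - snd Q)^2).

(* Characterizing point of the triangle {P,Q,S}: with side lengths
   a >= b >= c (a longest, c shortest), the similitude sends the longest
   edge to [(0,0),(1,0)] and the shortest edge to [(0,0),(x,y)], y >= 0, so
   x^2+y^2 = (c/a)^2 and (1-x)^2+y^2 = (b/a)^2. *)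
Definition char_point (P Q S : pt) : pt :=
  let u := dist P Q in let v := dist Q S in let w := dist P S in
  let a := Rmax u (Rmax v w) in
  let c := Rmin u (Rmin v w) in
  let b := u + v + w - a - c in
  let x := (a^2 + c^2 - b^2) / (2 * a^2) in
  (x, sqrt ((c / a)^2 - x^2)).

(* Non-degenerate triangle: pairwise distinct vertices (flat ones allowed). *)
Definition inD (p : pt) : Prop :=
  exists P Q S : pt, P <> Q /\ Q <> S /\ P <> S /\ char_point P Q S = p.

Definition mid (P Q : pt) : pt := ((fst P + fst Q) / 2, (snd P + snd Q) / 2).

Definition step (i : nat) (p : pt) : pt :=
  let A : pt := (0, 0) in let B := p in let C : pt := (1, 0) in
  let D := mid A B in let E := mid B C in let F := mid A C in
  let G : pt := ((fst A + fst B + fst C) / 3, (snd A + snd B + snd C) / 3) in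
  match i with
  | 1%nat => char_point A D G
  | 2%nat => char_point D B G
  | 3%nat => char_point B E G
  | 4%nat => char_point E C G
  | 5%nat => char_point C F G
  | _ => char_point F A G
  end.

Definition zstep (i : nat) (x : R) : R := fst (step i (x, 0)).

Definition xy_iter (l : list nat) (p : pt) : pt :=
  fold_left (fun q i => step i q) l p.
Definition z_iter (l : list nat) (x : R) : R :=
  fold_left (fun t i => zstep i t) l x.

(* Main.v *)
Require Import Defs.
From Stdlib Require Import Reals Lra List Psatz.
Open Scope R_scope.
Local Notation dist := Defs.dist.

Ltac rabs := unfold Rabs in *; repeat match goal with
  | |- context [Rcase_abs ?t] => destruct (Rcase_abs t)
  | H : context [Rcase_abs ?t] |- _ => destruct (Rcase_abs t) end; lra.

Lemma abs_mul_le x y A B : Rabs x <= A -> Rabs y <= B -> Rabs (x*y) <= A*B.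
Proof. intros. rewrite Rabs_mult. apply Rmult_le_compat; auto using Rabs_pos. Qed.

Lemma norm_le a b c d : sqrt (a^2+b^2) <= sqrt (c^2+d^2) + Rabs (a-c) + Rabs (b-d).
Proof.
  set (Sq := sqrt (c^2+d^2)).
  assert (HS: 0 <= Sq) by apply sqrt_pos.
  assert (HS2: Sq*Sq = c^2+d^2) by (apply sqrt_sqrt; nra).
  assert (Hc: Rabs c <= Sq).
  { rewrite <- sqrt_Rsqr_abs. apply sqrt_le_1_alt. unfold Rsqr; nra. }
  assert (Hd: Rabs d <= Sq).
  { rewrite <- sqrt_Rsqr_abs. apply sqrt_le_1_alt. unfold Rsqr; nra. }
  assert (Ha: Rabs a <= Rabs c + Rabs (a-c)) by rabs.
  assert (Hb: Rabs b <= Rabs d + Rabs (b-d)) by rabs.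
  rewrite <- (pow2_abs a), <- (pow2_abs b).
  assert (c^2 + d^2 = Rabs c ^2 + Rabs d ^2) by (rewrite !pow2_abs; ring).
  pose proof (Rabs_pos a); pose proof (Rabs_pos b); pose proof (Rabs_pos c);
  pose proof (Rabs_pos d); pose proof (Rabs_pos (a-c)); pose proof (Rabs_pos (b-d)).
  rewrite <- (sqrt_pow2 (Sq + Rabs (a-c) + Rabs (b-d))) by lra.
  apply sqrt_le_1_alt.
  set (e := Rabs (a-c)) in *; set (f := Rabs (b-d)) in *.
  set (A := Rabs a) in *; set (B := Rabs b) in *; set (C := Rabs c) in *; set (D := Rabs d) in *.
  assert (A^2 <= (C+e)^2) by nra.
  assert (B^2 <= (D+f)^2) by nra.
  nra.
Qed.

Lemma dist_lip P Q P' Q' e1 e2 :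
  Rabs ((fst P - fst Q) - (fst P' - fst Q')) <= e1 ->
  Rabs ((snd P - snd Q) - (snd P' - snd Q')) <= e2 ->
  Rabs (dist P Q - dist P' Q') <= e1 + e2.
Proof.
  intros H1 H2. unfold Defs.dist.
  pose proof (norm_le (fst P - fst Q) (snd P - snd Q) (fst P' - fst Q') (snd P' - snd Q')).
  pose proof (norm_le (fst P' - fst Q') (snd P' - snd Q') (fst P - fst Q) (snd P - snd Q)).
  rewrite (Rabs_minus_sym (fst P' - fst Q')) in H0.
  rewrite (Rabs_minus_sym (snd P' - snd Q')) in H0.
  apply Rabs_le. lra.
Qed.

Lemma dist_le2 P Q : Rabs (fst P - fst Q) <= 1 -> Rabs (snd P - snd Q) <= 1 -> dist P Q <= 2.
Proof.
  intros. unfold Defs.dist.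
  pose proof (norm_le (fst P - fst Q) (snd P - snd Q) 0 0).
  replace (0^2+0^2) with 0 in H1 by ring. rewrite sqrt_0 in H1.
  rewrite !Rminus_0_r in H1. lra.
Qed.

Lemma dist_ge P Q k : 0 <= k -> k <= Rabs (fst P - fst Q) -> k <= dist P Q.
Proof.
  intros. unfold Defs.dist. rewrite <- (sqrt_pow2 k) by lra. apply sqrt_le_1_alt.
  rewrite <- (pow2_abs (fst P - fst Q)). pose proof (pow2_ge_0 (snd P - snd Q)). pose proof (Rabs_pos (fst P - fst Q)). nra.
Qed.

Lemma dist_pos P Q : 0 <= dist P Q.
Proof. apply sqrt_pos. Qed.

Definition mx u v w := Rmax u (Rmax v w).
Definition mn u v w := Rmin u (Rmin v w).
Definition md u v w := u+v+w - mx u v w - mn u v w.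
Definition xf u v w := (mx u v w ^2 + mn u v w ^2 - md u v w ^2)/(2*mx u v w^2).

Lemma cp_eq P Q S : char_point P Q S =
  (xf (dist P Q) (dist Q S) (dist P S),
   sqrt ((mn (dist P Q) (dist Q S) (dist P S) / mx (dist P Q) (dist Q S) (dist P S))^2
         - xf (dist P Q) (dist Q S) (dist P S) ^2)).
Proof. reflexivity. Qed.

Lemma ord3 u v w : 0 <= u -> 0 <= v -> 0 <= w ->
  0 <= mn u v w <= md u v w /\ md u v w <= mx u v w /\ u <= mx u v w /\ v <= mx u v w /\ w <= mx u v w.
Proof. intros. unfold md, mx, mn, Rmax, Rmin. repeat destruct Rle_dec; lra. Qed.

Lemma mx_le u v w M : u <= M -> v <= M -> w <= M -> mx u v w <= M.
Proof. intros. unfold mx, Rmax. repeat destruct Rle_dec; lra. Qed.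

Lemma mx_ge u v w k : k <= u \/ k <= v \/ k <= w -> k <= mx u v w.
Proof. intros. unfold mx, Rmax. repeat destruct Rle_dec; lra. Qed.

Ltac pick := first [ repeat split; lra | left; repeat split; lra | right; pick ].

Lemma perm3 u v w :
  (mx u v w = u /\ md u v w = v /\ mn u v w = w) \/
  (mx u v w = u /\ md u v w = w /\ mn u v w = v) \/
  (mx u v w = v /\ md u v w = u /\ mn u v w = w) \/
  (mx u v w = v /\ md u v w = w /\ mn u v w = u) \/
  (mx u v w = w /\ md u v w = u /\ mn u v w = v) \/
  (mx u v w = w /\ md u v w = v /\ mn u v w = u).
Proof. unfold md, mx, mn, Rmax, Rmin. repeat destruct Rle_dec; pick. Qed.

Lemma Rmax_lip x y x' y' e : Rabs (x-x') <= e -> Rabs (y-y') <= e -> Rabs (Rmax x y - Rmax x' y') <= e.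
Proof. intros. unfold Rmax. repeat destruct Rle_dec; rabs. Qed.
Lemma Rmin_lip x y x' y' e : Rabs (x-x') <= e -> Rabs (y-y') <= e -> Rabs (Rmin x y - Rmin x' y') <= e.
Proof. intros. unfold Rmin. repeat destruct Rle_dec; rabs. Qed.
Definition cr (P Q S : pt) := (fst Q - fst P)*(snd S - snd P) - (snd Q - snd P)*(fst S - fst P).

Lemma dist_sq P Q : dist P Q * dist P Q = (fst P - fst Q)^2 + (snd P - snd Q)^2.
Proof. unfold Defs.dist. apply sqrt_sqrt. pose proof (pow2_ge_0 (fst P - fst Q)). pose proof (pow2_ge_0 (snd P - snd Q)). lra. Qed.

Lemma heron P Q S : 0 < mx (dist P Q) (dist Q S) (dist P S) ->
  (mn (dist P Q) (dist Q S) (dist P S) / mx (dist P Q) (dist Q S) (dist P S))^2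
  - xf (dist P Q) (dist Q S) (dist P S) ^2 = cr P Q S ^2 / mx (dist P Q) (dist Q S) (dist P S) ^4.
Proof.
  intros Ha. unfold xf.
  pose proof (dist_sq P Q) as hu. pose proof (dist_sq Q S) as hv. pose proof (dist_sq P S) as hw.
  set (u := dist P Q) in *. set (v := dist Q S) in *. set (w := dist P S) in *.
  assert (Hcr : cr P Q S ^2 = (2*(u*u)*(v*v) + 2*(v*v)*(w*w) + 2*(w*w)*(u*u)
     - (u*u)^2 - (v*v)^2 - (w*w)^2)/4).
  { rewrite hu, hv, hw. unfold cr. field. }
  rewrite Hcr.
  destruct (perm3 u v w) as [[H1 [H2 H3]]|[[H1 [H2 H3]]|[[H1 [H2 H3]]|[[H1 [H2 H3]]|[[H1 [H2 H3]]|[H1 [H2 H3]]]]]]];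
  rewrite H1, H2, H3 in *; field; lra.
Qed.

Lemma cp_range P Q S : 0 < mx (dist P Q) (dist Q S) (dist P S) ->
  0 <= fst (char_point P Q S) <= 1/2 /\ 0 <= snd (char_point P Q S) <= 1.
Proof.
  intros Ha. rewrite cp_eq. simpl.
  destruct (ord3 (dist P Q) (dist Q S) (dist P S)) as [[Hc Hcb] [Hba _]]; try apply dist_pos.
  unfold xf.
  set (a := mx (dist P Q) (dist Q S) (dist P S)) in *.
  set (b := md (dist P Q) (dist Q S) (dist P S)) in *.
  set (c := mn (dist P Q) (dist Q S) (dist P S)) in *.
  set (x := (a ^ 2 + c ^ 2 - b ^ 2) / (2 * a ^ 2)).
  assert (Hx : x = 1/2 - (b^2 - c^2)/(2*a^2)) by (unfold x; field; lra).
  assert (Hx1 : x = (a^2 - b^2 + c^2) * / (2*a^2)) by (unfold x; field; lra).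
  assert (Hi : 0 < / (2*a^2)) by (apply Rinv_0_lt_compat; nra).
  assert (0 <= x) by (rewrite Hx1; apply Rmult_le_pos; nra).
  assert (x <= 1/2).
  { rewrite Hx. assert (0 <= (b^2-c^2) * / (2*a^2)) by (apply Rmult_le_pos; nra).
    unfold Rdiv at 2. lra. }
  assert (Ht0 : 0 <= c / a) by (unfold Rdiv; apply Rmult_le_pos; [lra| left; apply Rinv_0_lt_compat; lra]).
  assert (Ht1 : c / a <= 1).
  { replace 1 with (a/a) by (field; lra). unfold Rdiv. apply Rmult_le_compat_r; [left; apply Rinv_0_lt_compat|]; lra. }
  split; [lra|]. split; [apply sqrt_pos|].
  apply Rle_trans with (sqrt 1); [|rewrite sqrt_1; lra]. apply sqrt_le_1_alt. pose proof (pow2_ge_0 x).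
  generalize dependent (c/a). intros t Ht0 Ht1. assert (t^2 <= 1) by (simpl; nra). lra.
Qed.
Lemma xf_lip u v w u' v' w' e :
  0 <= u <= 2 -> 0 <= v <= 2 -> 0 <= w <= 2 ->
  0 <= u' <= 2 -> 0 <= v' <= 2 -> 0 <= w' <= 2 ->
  1/6 <= mx u v w -> 1/6 <= mx u' v' w' ->
  Rabs (u - u') <= e -> Rabs (v - v') <= e -> Rabs (w - w') <= e ->
  Rabs (xf u v w - xf u' v' w') <= 100000 * e.
Proof.
  intros Hu Hv Hw Hu' Hv' Hw' Ha Ha' Eu Ev Ew.
  assert (He : 0 <= e) by (pose proof (Rabs_pos (u-u')); lra).
  assert (Ea : Rabs (mx u v w - mx u' v' w') <= e) by (unfold mx; repeat apply Rmax_lip; auto).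
  assert (Ec : Rabs (mn u v w - mn u' v' w') <= e) by (unfold mn; repeat apply Rmin_lip; auto).
  assert (Eb : Rabs (md u v w - md u' v' w') <= 5*e).
  { replace (md u v w - md u' v' w') with ((u-u')+(v-v')+(w-w') - (mx u v w - mx u' v' w') - (mn u v w - mn u' v' w')) by (unfold md; ring).
    revert Eu Ev Ew Ea Ec. generalize (u-u') (v-v') (w-w') (mx u v w - mx u' v' w') (mn u v w - mn u' v' w').
    intros. rabs. }
  destruct (ord3 u v w) as [[Hc Hcb] [Hba _]]; try lra.
  destruct (ord3 u' v' w') as [[Hc' Hcb'] [Hba' _]]; try lra.
  assert (Hm : mx u v w <= 2) by (apply mx_le; lra).
  assert (Hm' : mx u' v' w' <= 2) by (apply mx_le; lra).
  unfold xf.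
  set (a := mx u v w) in *. set (b := md u v w) in *. set (c := mn u v w) in *.
  set (a' := mx u' v' w') in *. set (b' := md u' v' w') in *. set (c' := mn u' v' w') in *.
  clearbody a b c a' b' c'.
  set (N := a^2 + c^2 - b^2). set (N' := a'^2 + c'^2 - b'^2).
  assert (EN : Rabs (N - N') <= 28*e).
  { assert (h1 : Rabs ((a-a')*(a+a')) <= e*4) by (apply abs_mul_le; [lra| rabs]).
    assert (h2 : Rabs ((c-c')*(c+c')) <= e*4) by (apply abs_mul_le; [lra| rabs]).
    assert (h3 : Rabs ((b-b')*(b+b')) <= (5*e)*4) by (apply abs_mul_le; [lra| rabs]).
    replace (N - N') with ((a-a')*(a+a') + (c-c')*(c+c') - (b-b')*(b+b')) by (unfold N, N'; ring).
    revert h1 h2 h3. generalize ((a-a')*(a+a')) ((c-c')*(c+c')) ((b-b')*(b+b')). intros. rabs. }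
  assert (EN' : Rabs N' <= 8).
  { apply Rabs_le. unfold N'. split; nra. }
  assert (Enum : Rabs ((N - N')*a'^2 + N'*(a'^2 - a^2)) <= 144*e).
  { assert (h1 : Rabs ((N-N')*a'^2) <= (28*e)*4) by (apply abs_mul_le; [lra| apply Rabs_le; split; nra]).
    assert (h2 : Rabs (N'*(a'^2-a^2)) <= 8*(e*4)).
    { apply abs_mul_le; [lra|]. replace (a'^2-a^2) with ((a'-a)*(a'+a)) by ring.
      apply abs_mul_le; [rewrite Rabs_minus_sym; lra| rabs]. }
    revert h1 h2. generalize ((N-N')*a'^2) (N'*(a'^2-a^2)). intros. rabs. }
  replace (N / (2*a^2) - N'/(2*a'^2)) with (((N - N')*a'^2 + N'*(a'^2 - a^2)) * / (2*a^2*a'^2))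
    by (field; lra).
  assert (Hq : 1/36 <= a^2) by nra. assert (Hq' : 1/36 <= a'^2) by nra.
  assert (HD : 2/1296 <= 2*a^2*a'^2).
  { assert (1/36 * (1/36) <= a^2 * a'^2) by (apply Rmult_le_compat; lra). lra. }
  assert (HI : / (2*a^2*a'^2) <= 648).
  { replace 648 with (/ (2/1296)) by field. apply Rinv_le_contravar; lra. }
  assert (HI0 : 0 < / (2*a^2*a'^2)) by (apply Rinv_0_lt_compat; lra).
  apply Rle_trans with ((144*e) * 648); [|lra].
  apply abs_mul_le; auto. rewrite Rabs_right; lra.
Qed.
Definition tri (i : nat) (p : pt) : pt * pt * pt :=
  let A : pt := (0, 0) in let B := p in let C : pt := (1, 0) in
  let D := mid A B in let E := mid B C in let F := mid A C in
  let G : pt := ((fst A + fst B + fst C) / 3, (snd A + snd B + snd C) / 3) in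
  match i with
  | 1%nat => (A, D, G)
  | 2%nat => (D, B, G)
  | 3%nat => (B, E, G)
  | 4%nat => (E, C, G)
  | 5%nat => (C, F, G)
  | _ => (F, A, G)
  end.

Definition T1 i p := fst (fst (tri i p)).
Definition T2 i p := snd (fst (tri i p)).
Definition T3 i p := snd (tri i p).

Lemma step_tri i p : step i p = char_point (T1 i p) (T2 i p) (T3 i p).
Proof. destruct i as [|[|[|[|[|[|[|i]]]]]]]; reflexivity. Qed.

Ltac tcase i := destruct i as [|[|[|[|[|[|[|i]]]]]]]; unfold T1, T2, T3, tri, mid; simpl.

Lemma tri_big i X Y : 0 <= X <= 1/2 -> 0 <= Y <= 1 ->
  1/6 <= mx (dist (T1 i (X,Y)) (T2 i (X,Y))) (dist (T2 i (X,Y)) (T3 i (X,Y))) (dist (T1 i (X,Y)) (T3 i (X,Y))).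
Proof.
  intros. apply mx_ge. tcase i;
  first [ left; apply dist_ge; [lra | simpl; rabs]
        | right; left; apply dist_ge; [lra | simpl; rabs]
        | right; right; apply dist_ge; [lra | simpl; rabs] ].
Qed.

Lemma tri_small i X Y : 0 <= X <= 1/2 -> 0 <= Y <= 1 ->
  dist (T1 i (X,Y)) (T2 i (X,Y)) <= 2 /\ dist (T2 i (X,Y)) (T3 i (X,Y)) <= 2 /\ dist (T1 i (X,Y)) (T3 i (X,Y)) <= 2.
Proof.
  intros. tcase i; repeat split; apply dist_le2; simpl; rabs.
Qed.

Lemma tri_cr i X Y : cr (T1 i (X,Y)) (T2 i (X,Y)) (T3 i (X,Y)) ^2 = Y^2/36.
Proof. tcase i; unfold cr; simpl; field. Qed.

Lemma tri_lip i X Y Z : 0 <= Y ->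
  Rabs (dist (T1 i (X,Y)) (T2 i (X,Y)) - dist (T1 i (Z,0)) (T2 i (Z,0))) <= Rabs (X-Z) + Y /\
  Rabs (dist (T2 i (X,Y)) (T3 i (X,Y)) - dist (T2 i (Z,0)) (T3 i (Z,0))) <= Rabs (X-Z) + Y /\
  Rabs (dist (T1 i (X,Y)) (T3 i (X,Y)) - dist (T1 i (Z,0)) (T3 i (Z,0))) <= Rabs (X-Z) + Y.
Proof.
  intros. tcase i; repeat split; apply dist_lip; simpl; rabs.
Qed.
Lemma step_range i X Y : 0 <= X <= 1/2 -> 0 <= Y <= 1 ->
  0 <= fst (step i (X,Y)) <= 1/2 /\ 0 <= snd (step i (X,Y)) <= 1.
Proof.
  intros. rewrite step_tri. apply cp_range. pose proof (tri_big i X Y H H0). lra.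
Qed.

Lemma step_y i X Y : 0 <= X <= 1/2 -> 0 <= Y <= 1 -> snd (step i (X,Y)) <= 6*Y.
Proof.
  intros. rewrite step_tri, cp_eq. cbn [snd]. rewrite heron by (pose proof (tri_big i X Y H H0); lra).
  rewrite tri_cr. pose proof (tri_big i X Y H H0).
  set (a := mx _ _ _) in *.
  rewrite <- (sqrt_pow2 (6*Y)) by lra. apply sqrt_le_1_alt.
  assert (Ha4 : 1/1296 <= a^4).
  { assert (1/36 <= a^2) by nra. replace (a^4) with (a^2*a^2) by ring.
    assert (1/36*(1/36) <= a^2*a^2) by (apply Rmult_le_compat; lra). lra. }
  assert (HY : 0 <= Y^2/36) by (pose proof (pow2_ge_0 Y); lra).
  replace (Y^2/36/a^4) with (Y^2/36 * / a^4) by (field; nra).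
  assert (/ a^4 <= 1296).
  { replace 1296 with (/ (1/1296)) by field. apply Rinv_le_contravar; lra. }
  apply Rle_trans with (Y^2/36 * 1296); [apply Rmult_le_compat_l; lra | nra].
Qed.

Lemma step_lip i X Y Z : 0 <= X <= 1/2 -> 0 <= Y <= 1 -> 0 <= Z <= 1/2 ->
  Rabs (fst (step i (X,Y)) - fst (step i (Z,0))) <= 100000 * (Rabs (X-Z) + Y).
Proof.
  intros. rewrite !step_tri, !cp_eq. cbn [fst snd].
  destruct (tri_small i X Y) as [s1 [s2 s3]]; try lra.
  destruct (tri_small i Z 0) as [t1 [t2 t3]]; try lra.
  destruct (tri_lip i X Y Z) as [l1 [l2 l3]]; try lra.
  apply xf_lip; repeat split; try apply dist_pos; auto; apply tri_big; lra.
Qed.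

Lemma main n : exists K, 0 <= K /\ forall l, length l = n -> forall x y, 0<=x<=1/2 -> 0<=y<=1 ->
  0 <= fst (xy_iter l (x,y)) <= 1/2 /\ 0 <= snd (xy_iter l (x,y)) <= 1 /\
  0 <= z_iter l x <= 1/2 /\ Rabs (fst (xy_iter l (x,y)) - z_iter l x) <= K*y /\
  Rabs (snd (xy_iter l (x,y))) <= K*y.
Proof.
  induction n as [|n IH].
  - exists 1. split; [lra|]. intros l Hl x y Hx Hy. destruct l; [|discriminate].
    unfold xy_iter, z_iter; simpl. rewrite Rminus_diag, Rabs_R0, Rabs_right by lra. lra.
  - destruct IH as [K [HK IH]]. exists (200000*K + 6*K). split; [lra|].
    intros l Hl x y Hx Hy.
    destruct (exists_last (l:=l)) as [l' [a Ha]]; [intro; subst; discriminate|]. subst l.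
    rewrite length_app in Hl. simpl in Hl.
    assert (Hl' : length l' = n) by lia.
    destruct (IH l' Hl' x y Hx Hy) as [HX [HY [HZ [E1 E2]]]].
    unfold xy_iter, z_iter in *. rewrite !fold_left_app. simpl.
    destruct (fold_left (fun q i => step i q) l' (x, y)) as [X Y]. simpl in *.
    set (Z := fold_left (fun t i => zstep i t) l' x) in *.
    unfold zstep.
    destruct (step_range a X Y) as [R1 R2]; auto.
    destruct (step_range a Z 0) as [R3 R4]; auto; try lra.
    pose proof (step_y a X Y HX HY).
    pose proof (step_lip a X Y Z HX HY HZ).
    rewrite Rabs_right in E2 by lra.
    assert (0 <= K*y) by (apply Rmult_le_pos; lra).
    repeat split; try lra.
    all: first [ apply Rle_trans with (100000 * (Rabs (X - Z) + Y)); [assumption| lra] | rewrite Rabs_right by lra; lra ].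
Qed.

Lemma inD_range x y : inD (x,y) -> 0 <= x <= 1/2 /\ 0 <= y <= 1.
Proof.
  intros [P [Q [S [HPQ [_ [_ Hc]]]]]].
  assert (Hd : 0 < dist P Q).
  { destruct (Rle_lt_or_eq_dec 0 (dist P Q) (dist_pos P Q)) as [h|h]; auto.
    exfalso. apply HPQ. pose proof (dist_sq P Q) as hs. rewrite <- h in hs.
    pose proof (pow2_ge_0 (fst P - fst Q)). pose proof (pow2_ge_0 (snd P - snd Q)).
    assert (fst P - fst Q = 0) by nra. assert (snd P - snd Q = 0) by nra.
    destruct P, Q; simpl in *; f_equal; lra. }
  pose proof (cp_range P Q S) as Hr. rewrite Hc in Hr. apply Hr.
  destruct (ord3 (dist P Q) (dist Q S) (dist P S)) as [_ [_ [h _]]]; try apply dist_pos. lra.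
Qed.

Theorem lemma21 :
  forall N : nat, (1 <= N)%nat ->
  exists K : R,
    forall l : list nat, length l = N -> Forall (fun i => (1 <= i <= 6)%nat) l ->
    forall x y : R, inD (x, y) ->
      Rabs (fst (xy_iter l (x, y)) - z_iter l x) <= K * y /\
      Rabs (snd (xy_iter l (x, y))) <= K * y.
Proof.
  intros N _. destruct (main N) as [K [_ HK]]. exists K.
  intros l Hl _ x y HD. destruct (inD_range x y HD).
  destruct (HK l Hl x y) as [_ [_ [_ [h1 h2]]]]; auto.
Qed.
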